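(* Let $q(n)$ denote the number of partitions of $n$ into distinct parts, with $q(0)=1$ and $q(n)=0$ for $n<0$, and define $s(n)=q(n)-2q(n-1)+q(n-2)$ for $n\ge 0$. Then for every integer $n\ge 6$, $s(n)$ equals the number of partitions of $n$ into distinct parts $p_1>p_2>\dots>p_k$ with $k\ge 3$ such that $$p_1=p_2+1=p_3+2>p_4>\dots>p_k>1,$$ i.e. strict partitions of $n$ with at least three parts, the three largest parts consecutive integers, and the smallest part at least $2$.
   Context: $s(n)$ is the second difference of the sequence $q(n)$ of numbers of strict partitions (partitions into distinct parts). *)

(* Defs.v *)
From mathcomp Require Import all_boot all_order all_algebra.
Set Implicit Arguments. Unset Strict Implicit. Unset Printing Implicit Defensive.
Import GRing.Theory Num.Theory.

(* A partition into distinct parts is encoded by its (finite) set of parts;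
   every part of a strict partition of n lies in {0,...,n}, so we use
   subsets of 'I_n.+1.  [parts A] lists the parts in decreasing order
   p_1 > p_2 > ... > p_k. *)
Definition parts (N : nat) (A : {set 'I_N}) : seq nat :=
  sort geq (map (@nat_of_ord N) (enum A)).

Definition strict_partitions (n : nat) : {set {set 'I_n.+1}} :=
  [set A : {set 'I_n.+1} | all (fun p => 0 < p) (parts A) && (sumn (parts A) == n)].

Definition q (n : nat) : nat := #|strict_partitions n|.

Definition qz (z : int) : nat :=
  match z with Posz m => q m | Negz _ => 0%N end.

Definition s (n : nat) : int :=
  ((qz n)%:Z - 2 * (qz (n%:Z - 1))%:Z + (qz (n%:Z - 2))%:Z)%R.

Definition good_parts (p : seq nat) : bool :=
  [&& 3 <= size p,
      nth 0 p 0 == nth 0 p 1 + 1,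
      nth 0 p 1 + 1 == nth 0 p 2 + 2 &
      1 < last 0 p].

(* Main.v *)
Require Import Defs.
From mathcomp Require Import all_boot all_order all_algebra.
From mathcomp Require Import zify.

Definition U N : seq (seq nat) := map (@parts N) (enum [set: {set 'I_N}]).

Lemma card_countU N (P : pred (seq nat)) :
  #|[set A : {set 'I_N} | P (parts A)]| = count P (U N).
Proof.
rewrite /U count_map cardE -size_filter enum_setT /enum_mem; congr size.
by apply: eq_filter => A; rewrite !inE.
Qed.

Lemma mem_parts N (A : {set 'I_N}) (i : 'I_N) : (val i \in parts A) = (i \in A).
Proof. by rewrite /parts mem_sort (mem_map val_inj) mem_enum. Qed.

Lemma parts_inj N : injective (@parts N).
Proof.
move=> A B h; apply/setP => i; by rewrite -!mem_parts h.
Qed.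

Lemma uniqU N : uniq (U N).
Proof. by rewrite /U (map_inj_uniq (@parts_inj N)) enum_uniq. Qed.

Lemma mem_U N s : (s \in U N) = sorted gtn s && all (fun x => x < N) s.
Proof.
apply/idP/idP.
  case/mapP => A _ ->.
  rewrite gtn_sorted_uniq_geq sort_uniq (map_inj_uniq val_inj) enum_uniq /=.
  rewrite sort_sorted /=; last by move=> a b; exact: leq_total.
  apply/allP => x; rewrite mem_sort => /mapP [i _ ->]; exact: ltn_ord.
case/andP => hs ha.
apply/mapP; exists [set i : 'I_N | val i \in s]; first by rewrite mem_enum in_setT.
have hu : uniq s by move: hs; rewrite gtn_sorted_uniq_geq => /andP[].
have hg : sorted geq s by move: hs; rewrite gtn_sorted_uniq_geq => /andP[].
rewrite /parts.
have -> : sort geq [seq nat_of_ord i | i <- enum [set i : 'I_N | val i \in s]] = sort geq s.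
  apply/perm_sortP.
  - by move=> a b; exact: leq_total.
  - by move=> a b c h1 h2; exact: leq_trans h2 h1.
  - by move=> a b /andP[h1 h2]; apply/eqP; rewrite eqn_leq; apply/andP; split.
  apply: uniq_perm => //; first by rewrite (map_inj_uniq val_inj) enum_uniq.
  move=> x; apply/mapP/idP.
    by case=> i; rewrite mem_enum inE => h ->.
  move=> hx; have hN : x < N by move/allP: ha; apply.
  by exists (Ordinal hN); rewrite // mem_enum inE.
by rewrite sorted_sort //; move=> a b c h1 h2; exact: leq_trans h2 h1.
Qed.

Lemma count_bij (T : eqType) (l1 l2 : seq T) (P Q : pred T) (f g : T -> T) :
  uniq l1 -> uniq l2 ->
  (forall x, x \in l1 -> P x -> (f x \in l2) && Q (f x)) ->
  (forall y, y \in l2 -> Q y -> (g y \in l1) && P (g y)) ->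
  (forall x, x \in l1 -> P x -> g (f x) = x) ->
  (forall y, y \in l2 -> Q y -> f (g y) = y) ->
  count P l1 = count Q l2.
Proof.
move=> u1 u2 hf hg hgf hfg.
rewrite -!size_filter -(size_map f).
apply: perm_size; apply: uniq_perm.
- rewrite map_inj_in_uniq ?filter_uniq //.
  move=> x y; rewrite !mem_filter => /andP[px x1] /andP[py y1] e.
  by rewrite -(hgf x) // e hgf.
- exact: filter_uniq.
move=> y; apply/mapP/idP.
  case=> x; rewrite mem_filter => /andP[px x1] ->.
  by rewrite mem_filter; case/andP: (hf x x1 px) => -> ->.
rewrite mem_filter => /andP[qy y2].
exists (g y); last by rewrite hfg.
by rewrite mem_filter; case/andP: (hg y y2 qy) => -> ->.
Qed.

Lemma count_split (T : Type) (a b : pred T) l :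
  count a l = count (fun x => a x && b x) l + count (fun x => a x && ~~ b x) l.
Proof. elim: l => //= x l ->; case: (a x); case: (b x) => /=; lia. Qed.

Lemma le_sumn s : all (fun x => x <= sumn s) s.
Proof.
elim: s => //= x s IH; rewrite leq_addr /=.
apply/allP => y /(allP IH) h; exact: leq_trans h (leq_addl _ _).
Qed.

Lemma inU N s : sorted gtn s -> sumn s < N -> s \in U N.
Proof.
move=> hs hN; rewrite mem_U hs /=.
apply/allP => x /(allP (le_sumn s)) h; exact: leq_ltn_trans h hN.
Qed.

Definition Dq m (s : seq nat) := all (fun x => 0 < x) s && (sumn s == m).
Definition Dd m (s : seq nat) := Dq m s && (1 \notin s).
Definition c1 (s : seq nat) := if s is x :: y :: _ then x == y.+1 else false.
Definition c2 (s : seq nat) :=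
  if s is x :: y :: z :: _ then (x == y.+1) && (y == z.+1) else false.
Definition E m s := Dd m s && c1 s.
Definition G m s := Dd m s && c2 s.

Lemma gtn_trans : transitive gtn.
Proof. move=> a b c /= h1 h2; exact: ltn_trans h2 h1. Qed.

Lemma path_rcons1 x s : path gtn x s -> 1 < x -> all (fun y => 1 < y) s ->
  path gtn x (rcons s 1).
Proof.
elim: s x => [|y t IH] x /=; first by move=> _ ->.
by case/andP=> hyx hp h1x /andP[h1y ha]; rewrite hyx IH.
Qed.

Lemma sorted_rcons1 s : sorted gtn s -> all (fun y => 1 < y) s ->
  sorted gtn (rcons s 1).
Proof. case: s => //= x t hp /andP[h1 ha]; exact: path_rcons1. Qed.

Lemma rcons_filter1 s : sorted gtn s -> all (fun x => 0 < x) s -> 1 \in s ->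
  rcons [seq x <- s | x != 1] 1 = s.
Proof.
elim: s => //= x t IH hp /andP[hx ha].
have ht : all (gtn x) t := order_path_min gtn_trans hp.
have hs : sorted gtn t := path_sorted hp.
case: eqP => [ex|hne] /=.
  subst x; case: t ht ha {IH hp hs} => //= y t /andP[hy _] /andP[hy0 _].
  by move: hy; rewrite /gtn /=; lia.
rewrite inE => /orP [/eqP h|h]; first by case: hne.
by rewrite IH.
Qed.

Lemma La N m : 0 < m -> m < N ->
  count (Dq m) (U N) = count (Dd m) (U N) + count (Dd m.-1) (U N).
Proof.
move=> hm hN.
rewrite (count_split _ (Dq m) (fun s => 1 \in s)) addnC; congr (_ + _).
apply: (@count_bij _ _ _ _ _ (fun s => [seq x <- s | x != 1]) (fun s => rcons s 1));
  rewrite ?uniqU //.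
- move=> x; rewrite mem_U => /andP[hs hb] /andP[/andP[hp /eqP hsum] h1].
  have e := rcons_filter1 x hs hp h1.
  have hsf : sumn [seq x <- x | x != 1] = m.-1.
    by move: hsum; rewrite -{1}e sumn_rcons; lia.
  apply/andP; split.
    apply: inU; first by apply: sorted_filter hs; exact: gtn_trans.
    by rewrite hsf; lia.
  rewrite /Dd /Dq hsf eqxx mem_filter eqxx /= !andbT.
  by apply/allP => y; rewrite mem_filter => /andP[_ /(allP hp)].
- move=> y; rewrite mem_U => /andP[hs hb] /andP[/andP[hp /eqP hsum] h1].
  have h2 : all (fun x => 1 < x) y.
    apply/allP => z hz; have := allP hp z hz.
    by case: (z =P 1) => [e|]; [move: h1; rewrite -e hz | lia].
  apply/andP; split.
    by apply: inU; [exact: sorted_rcons1 | rewrite sumn_rcons hsum; lia].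
  rewrite /Dq mem_rcons inE eqxx /= all_rcons hp /= sumn_rcons hsum.
  apply/andP; split => //; apply/eqP; lia.
- move=> x; rewrite mem_U => /andP[hs hb] /andP[/andP[hp /eqP hsum] h1].
  exact: rcons_filter1.
- move=> y _ /andP[_ h1]; rewrite filter_rcons /=.
  apply/all_filterP/allP => z hz; apply/eqP => e; move: h1; by rewrite -e hz.
Qed.

Lemma DdE m s : Dd m s = all (fun x => 1 < x) s && (sumn s == m).
Proof.
have e : forall s : seq nat, all (fun x => 0 < x) s && (1 \notin s) = all (fun x => 1 < x) s.
  elim=> //= x t IH; rewrite inE negb_or -IH.
  by case: x => [|[|x]] //=; case: (all _ t).
rewrite /Dd /Dq -e; by case: (all _ s); case: (sumn s == m); case: (1 \in s).
Qed.

Lemma Lb N m : 3 <= m -> m < N ->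
  count (Dd m) (U N) = count (Dd m.-1) (U N) + count (E m) (U N).
Proof.
move=> hm hN.
rewrite (count_split _ (Dd m) c1) addnC; congr (_ + _).
apply: (@count_bij _ _ _ _ _ (fun s => if s is x :: t then x.-1 :: t else s)
                             (fun s => if s is x :: t then x.+1 :: t else s));
  rewrite ?uniqU //.
- move=> x; rewrite mem_U DdE => /andP[hs _] /andP[/andP[ha /eqP hsum] hc].
  case: x hs ha hsum hc => [|a [|b t]] /=; first lia.
    move=> _ /andP[h1 _] hsum _; rewrite addn0 in hsum.
    rewrite DdE /= andbT; apply/andP; split; first by apply: inU => //=; lia.
    apply/andP; split; [lia|apply/eqP; lia].
  move=> /andP[hba hp] /and3P[h1 h2 ha] hsum hc.
  rewrite DdE /= h2 ha; apply/and3P; split.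
  - apply: inU => /=; last lia.
    by rewrite hp andbT; move: hc hba; rewrite /gtn /=; lia.
  - move: hc; rewrite !andbT; lia.
  - apply/eqP; lia.
- move=> x; rewrite mem_U DdE => /andP[hs _] /andP[ha /eqP hsum].
  case: x hs ha hsum => [|a t] /=; first lia.
  case: t => [|b t] /=.
    move=> _ /andP[h1 _] hsum; rewrite addn0 in hsum.
    rewrite DdE /= andbT; apply/andP; split; first by apply: inU => //=; lia.
    apply/andP; split; [lia|apply/eqP; lia].
  move=> /andP[hba hp] /and3P[h1 h2 ha] hsum.
  rewrite DdE /= h2 ha; apply/and3P; split.
  - apply: inU => /=; last lia.
    by rewrite hp andbT; move: hba; rewrite /gtn /=; lia.
  - rewrite !andbT; apply/andP; split; [lia|apply/eqP; lia].
  - lia.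
- move=> x _; rewrite DdE => /andP[/andP[ha /eqP hsum] _].
  case: x ha hsum => [|a t] /=; first lia.
  by case/andP => h1 _ _; rewrite prednK //; lia.
- by move=> [|a t].
Qed.

Lemma Lc N m : 6 <= m -> m < N ->
  count (E m) (U N) = count (E (m - 2)) (U N) + count (G m) (U N).
Proof.
move=> hm hN.
rewrite (count_split _ (E m) c2) addnC; congr (_ + _); last first.
  apply: eq_count => s; rewrite /E /G.
  case: s => [|a [|b [|c t]]] /=; rewrite ?andbF ?andbT //.
  by case: (a == b.+1); rewrite /= ?andbF ?andbT.
apply: (@count_bij _ _ _ _ _
   (fun s => if s is x :: y :: t then x.-1 :: y.-1 :: t else s)
   (fun s => if s is x :: y :: t then x.+1 :: y.+1 :: t else s));
  rewrite ?uniqU //.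
- move=> x; rewrite mem_U /E DdE => /andP[hs _] /andP[/andP[/andP[ha /eqP hsum] hc1] hc].
  case: x hs ha hsum hc1 hc => [|a [|b [|c t]]] //=.
    rewrite /gtn /= => /andP[hba _] /and3P[h1 h2 _] hsum /eqP hab _.
    rewrite DdE /=; apply/andP; split.
      by apply: inU => /=; rewrite ?andbT /gtn /=; lia.
    lia.
  rewrite /gtn /= => /and3P[hba hcb hp] /and4P[h1 h2 h3 ha] hsum /eqP hab hc.
  rewrite DdE /= ha h3; apply/andP; split.
    by apply: inU => /=; rewrite ?hp ?andbT /gtn /=; move: hc; rewrite hab /=; lia.
  lia.
- move=> x; rewrite mem_U /E DdE => /andP[hs _] /andP[/andP[ha /eqP hsum] hc1].
  case: x hs ha hsum hc1 => [|a [|b [|c t]]] //=.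
    rewrite /gtn /= => /andP[hba _] /and3P[h1 h2 _] hsum /eqP hab.
    rewrite DdE /=; apply/andP; split.
      by apply: inU => /=; rewrite ?andbT /gtn /=; lia.
    lia.
  rewrite /gtn /= => /and3P[hba hcb hp] /and4P[h1 h2 h3 ha] hsum /eqP hab.
  rewrite DdE /= ha h3; apply/andP; split.
    by apply: inU => /=; rewrite ?hp ?andbT /gtn /=; lia.
  lia.
- move=> x _; rewrite /E DdE => /andP[/andP[/andP[ha _] _] _].
  case: x ha => [|a [|b t]] //= /and3P[h1 h2 _].
  by rewrite !prednK //; lia.
- by move=> [|a [|b t]].
Qed.

Lemma indep N M m : m < N -> m < M ->
  count (Dq m) (U N) = count (Dq m) (U M).
Proof.
move=> hN hM; apply: (@count_bij _ _ _ _ _ id id); rewrite ?uniqU //.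
- move=> x; rewrite mem_U => /andP[hs _] h; rewrite h andbT.
  by apply: inU => //; case/andP: h => _ /eqP ->.
- move=> x; rewrite mem_U => /andP[hs _] h; rewrite h andbT.
  by apply: inU => //; case/andP: h => _ /eqP ->.
Qed.

Lemma qE m : q m = count (Dq m) (U m.+1).
Proof. exact: (card_countU m.+1 (Dq m)). Qed.

Lemma last_min x s : path gtn x s -> all (fun y => last x s <= y) (x :: s).
Proof.
elim: s x => [|y t IH] x /=; first by rewrite leqnn.
case/andP => hyx hp; have := IH y hp => /= /andP[h1 h2].
rewrite h1 h2 andbT; move: hyx; rewrite /gtn /=; lia.
Qed.

Lemma goodE n : #|[set A in strict_partitions n | good_parts (parts A)]|
  = count (G n) (U n.+1).
Proof.
have -> : [set A in strict_partitions n | good_parts (parts A)] =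
          [set A : {set 'I_n.+1} | (fun p => Dq n p && good_parts p) (parts A)].
  by apply/setP => A; rewrite !inE.
rewrite (card_countU n.+1 (fun p => Dq n p && good_parts p)); apply: eq_in_count => s; rewrite mem_U => /andP[hs _].
rewrite /G DdE /Dq /good_parts.
case: s hs => [|a [|b [|c t]]] //=; rewrite ?andbF //.
move=> hp; have hm := last_min a [:: b, c & t] hp; simpl in hm.
have hl : last c t \in [:: a, b, c & t].
  by have := mem_last c t; rewrite !inE => ->; rewrite !orbT.
move: hm => /and4P[la lb lc lt].
apply/idP/idP.
- move=> /and4P[/andP[/and4P[pa pb pc pt] hs] h1 h2 h3].
  have ht : all (leq 2) t := sub_all (fun y hy => leq_trans h3 hy) lt.
  rewrite ht hs /=; lia.
- move=> /and3P[/andP[/and4P[pa pb pc pt] hs] h1 h2].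
  have ht : all (leq 1) t := sub_all (fun y (hy : 1 < y) => ltnW hy) pt.
  have hall : all (leq 2) [:: a, b, c & t] by rewrite /= pa pb pc pt.
  have h3 : 1 < last c t := allP hall _ hl.
  rewrite ht hs h3 /=; lia.
Qed.

Theorem proposition1p3 (n : nat) :
  6 <= n ->
  s n = Posz #|[set A in strict_partitions n | good_parts (parts A)]|.
Proof.
move=> hn.
have e1 : (n%:Z - 1)%R = Posz (n - 1) by lia.
have e2 : (n%:Z - 2)%R = Posz (n - 2) by lia.
rewrite /s e1 e2 /= goodE.
set N := n.+1.
have q0 := qE n.
have q1 : q (n - 1) = count (Dq (n - 1)) (U N).
  by rewrite qE (indep (n - 1).+1 N (n - 1)) //; rewrite /N; lia.
have q2 : q (n - 2) = count (Dq (n - 2)) (U N).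
  by rewrite qE (indep (n - 2).+1 N (n - 2)) //; rewrite /N; lia.
have a0 := La N n (ltac:(lia)) (ltac:(rewrite /N; lia)).
have a1 := La N (n - 1) (ltac:(lia)) (ltac:(rewrite /N; lia)).
have a2 := La N (n - 2) (ltac:(lia)) (ltac:(rewrite /N; lia)).
have b0 := Lb N n (ltac:(lia)) (ltac:(rewrite /N; lia)).
have b2 := Lb N (n - 2) (ltac:(lia)) (ltac:(rewrite /N; lia)).
have c0 := Lc N n (ltac:(lia)) (ltac:(rewrite /N; lia)).
have f1 : n.-1 = n - 1 by lia.
have f2 : (n - 1).-1 = n - 2 by lia.
have f3 : (n - 2).-1 = n - 3 by lia.
rewrite f1 in a0 b0; rewrite f2 in a1; rewrite f3 in a2 b2.
rewrite q0 q1 q2.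
rewrite /N in q1 q2 a0 a1 a2 b0 b2 c0 *; lia.
Qed.
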